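(* If $\vec \theta \in \Lambda$, then for every index $(\{i, j\},a)$ we have $\theta_{\{i,j\},a} \equiv 0 \pmod{\frac{2\pi}{\nu}}$, where $\nu$ is the order of $a$ in $\mathbb Z_g$. In particular, for all nonzero $a\in\mathbb Z_g$, $\theta_{\{i,j\},a} \equiv 0 \pmod{\frac{2\pi}{g}}$.
   Context: Let $g\ge 2$, $k\ge 2$ be integers, $\mathbb Z_g$ the integers mod $g$, and $d=\binom{k}{2}(g-1)$. Index the coordinates of $\mathbb R^d$ by pairs $(\{i,j\},a)$ with $1\le i<j\le k$ and $a\in\mathbb Z_g\setminus\{0\}$. Define $Z:(\mathbb Z_g)^k\to\mathbb R^d$ by $[Z(\vec x)]_{\{i,j\},a}=1-1/g$ if $x_i-x_j=a$ and $-1/g$ otherwise. Define $\Phi(\vec\theta)=\sum_{\vec x\in(\mathbb Z_g)^k} g^{-k}e^{i\vec\theta\cdot Z(\vec x)}$ for $\vec\theta\in\mathbb R^d$, and $\Lambda=\{\vec\theta\in\mathbb R^d: |\Phi(\vec\theta)|=1\}$. *)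

(* Defs.v *)
From mathcomp Require Import all_boot all_order all_algebra all_fingroup.
From mathcomp Require Import complex.
From mathcomp Require Import all_classical all_reals all_analysis.
Set Implicit Arguments. Unset Strict Implicit. Unset Printing Implicit Defensive.
Import GRing.Theory Num.Theory.
Local Open Scope ring_scope.

(* Coordinates of R^d are indexed by ((i,j),a) with i < j in 'I_k
   (0-based version of 1 <= i < j <= k) and a : 'Z_g, a != 0.
   A vector theta in R^d is represented by a function
   theta : 'I_k -> 'I_k -> 'Z_g -> R, of which only the values at
   i < j, a != 0 are used. *)

Definition Zcoord (R : realType) (g k : nat) (x : {ffun 'I_k -> 'Z_g})
  (i j : 'I_k) (a : 'Z_g) : R :=
  (if x i - x j == a then 1 else 0) - 1 / g%:R.

Definition dotZ (R : realType) (g k : nat) (theta : 'I_k -> 'I_k -> 'Z_g -> R)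
  (x : {ffun 'I_k -> 'Z_g}) : R :=
  \sum_(i : 'I_k) \sum_(j : 'I_k | (i < j)%N) \sum_(a : 'Z_g | a != 0)
     theta i j a * Zcoord R x i j a.

Definition Phi (R : realType) (g k : nat) (theta : 'I_k -> 'I_k -> 'Z_g -> R)
  : R[i] :=
  \sum_(x : {ffun 'I_k -> 'Z_g})
     ((g%:R ^- k : R)%:C * (cos (dotZ theta x) +i* sin (dotZ theta x)))%C.

Definition inLambda (R : realType) (g k : nat)
  (theta : 'I_k -> 'I_k -> 'Z_g -> R) : Prop :=
  `|Phi theta| = 1.

(* Main.v *)
Require Import Defs.
From mathcomp Require Import all_boot all_order all_algebra all_fingroup.
From mathcomp Require Import complex.
From mathcomp Require Import all_classical all_reals all_analysis.
From mathcomp Require Import ring lra.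
Import GRing.Theory Num.Theory Order.TTheory.
Local Open Scope ring_scope.
Set Implicit Arguments. Unset Strict Implicit. Unset Printing Implicit Defensive.
Lemma cosDz (R : realType) (t : R) (m : int) : cos (t + m%:~R * (2 * pi)) = cos t.
Proof.
have e2 : 2 * pi = pi *+ 2 :> R by rewrite mulr2n mulrDl mul1r.
case: m => n.
- by rewrite -pmulrn !mulr_natl (periodicn (@cosD2pi R)).
- have ht : t + (Negz n)%:~R * (2 * pi) + (pi *+ 2) *+ n.+1 = t.
    by rewrite NegzE mulrNz -pmulrn mulNr !mulr_natl subrK.
  by rewrite -{2}ht (periodicn (@cosD2pi R)).
Qed.

Lemma cos_eq1 (R : realType) (t : R) : cos t = 1 -> exists m : int, t = m%:~R * (2 * pi).
Proof.
move=> ct.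
have p0 := @pi_gt0 R.
have h2 : 0 < 2 * pi :> R by apply: mulr_gt0.
set m := Num.floor (t / (2 * pi)).
have hl : m%:~R <= t / (2 * pi) := Num.Theory.floor_le _.
have hu : t / (2 * pi) < (m + 1)%:~R := Num.Theory.floorD1_gt _.
set r := t - m%:~R * (2 * pi).
have r0 : 0 <= r by move: hl; rewrite ler_pdivlMr // /r subr_ge0.
have r1 : r < 2 * pi :> R.
  by move: hu; rewrite ltr_pdivrMr // intrD mulrDl mul1r /r; lra.
have cr : cos r = 1 by rewrite -ct /r -(cosDz _ m) subrK.
exists m; apply/eqP; rewrite -subr_eq0 -/r; apply/eqP.
have [rp|rp] := lerP r pi.
  apply: (@cos_inj R); rewrite ?cr ?cos0 // in_itv /= ?lexx ?r0 ?rp ?(ltW p0) //.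
exfalso.
have : cos (2 * pi - r) = 1 :> R.
  by rewrite (_ : 2 * pi - r = - r + 1%:~R * (2 * pi)) ?cosDz ?cosN // mul1r addrC.
move=> c2.
have : 2 * pi - r = 0 :> R.
  apply: (@cos_inj R); rewrite ?c2 ?cos0 // in_itv /= ?lexx ?(ltW p0) //; lra.
lra.
Qed.
Lemma sum_cplx (R : realType) (T : finType) (a b : T -> R) :
  (\sum_x (a x +i* b x) = (\sum_x a x) +i* (\sum_x b x))%C.
Proof.
apply: (big_ind3 (fun s u v => s = (u +i* v)%C)) => //.
by move=> s1 u1 v1 s2 u2 v2 -> ->.
Qed.

Lemma avg_eq1 (R : realType) (T : finType) (al : T -> R) (c : R) :
  c * #|T|%:R = 1 ->
  `|\sum_x ((c%:C * (cos (al x) +i* sin (al x)))%C)| = 1 ->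
  forall x y, cos (al x - al y) = 1.
Proof.
move=> hc.
have -> : \sum_x ((c%:C * (cos (al x) +i* sin (al x)))%C) =
   ((c * \sum_x cos (al x)) +i* (c * \sum_x sin (al x)))%C.
  rewrite !mulr_sumr -sum_cplx; apply: eq_bigr => x _.
  by rewrite [LHS]/GRing.mul /= !mul0r subr0 addr0.
move=> /(congr1 (@complex.Re R)).
rewrite /Num.norm /= => hs.
set SC := \sum_x cos (al x); set SS := \sum_x sin (al x).
set N := (#|T|%:R : R) in hc *.
have h1 : (c * SC) ^+ 2 + (c * SS) ^+ 2 = 1.
  by rewrite -[LHS]sqr_sqrtr ?addr_ge0 ?sqr_ge0 // hs expr1n.
have h2 : SC ^+ 2 + SS ^+ 2 = N ^+ 2.
  transitivity ((c * N) ^+ 2 * (SC ^+ 2 + SS ^+ 2)); first by rewrite hc expr1n mul1r.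
  transitivity (N ^+ 2 * ((c * SC) ^+ 2 + (c * SS) ^+ 2)); first by ring.
  by rewrite h1 mulr1.
have h3 : \sum_x \sum_y cos (al x - al y) = SC ^+ 2 + SS ^+ 2.
  under eq_bigr => x _ do under eq_bigr => y _ do rewrite cosB.
  under eq_bigr => x _ do rewrite big_split /= -!mulr_sumr.
  by rewrite big_split /= -!mulr_suml.
have h4 : \sum_(x : T) \sum_(y : T) (1 : R) = N ^+ 2.
  by rewrite !sumr_const /N expr2 mulr_natr.
have h5 : \sum_x \sum_y (1 - cos (al x - al y)) = 0.
  under eq_bigr => x _ do rewrite sumrB.
  by rewrite sumrB h3 h4 h2 subrr.
move=> x y.
have hge : forall x, 0 <= \sum_y (1 - cos (al x - al y)).
  by move=> x'; apply: sumr_ge0 => y' _; rewrite subr_ge0 cos_le1.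
have hx := (psumr_eq0P (fun x _ => hge x) h5) x isT.
have hy : forall y', true -> 0 <= 1 - cos (al x - al y').
  by move=> y' _; rewrite subr_ge0 cos_le1.
have := (psumr_eq0P hy hx) y isT.
by move/eqP; rewrite subr_eq0 => /eqP.
Qed.

Lemma sum4 (R : realType) (I : finType) (P : pred I) (F1 F2 F3 F4 : I -> R) :
  \sum_(x | P x) F1 x - \sum_(x | P x) F2 x - \sum_(x | P x) F3 x + \sum_(x | P x) F4 x
  = \sum_(x | P x) (F1 x - F2 x - F3 x + F4 x).
Proof. by rewrite -!sumrB -big_split. Qed.

Definition Xf (g k : nat) (i j : 'I_k) (u v : 'Z_g) : {ffun 'I_k -> 'Z_g} :=
  [ffun l => if l == i then u else if l == j then v else 0].

Definition Ind (R : realType) (g k : nat) (x : {ffun 'I_k -> 'Z_g}) (p q : 'I_k) (a : 'Z_g) : R :=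
  if x p - x q == a then 1 else 0.

Lemma alg4 (R : comRingType) (t c b1 b2 b3 b4 : R) :
  t*(b1-c) - t*(b2-c) - t*(b3-c) + t*(b4-c) = t*(b1-b2-b3+b4).
Proof. ring. Qed.

Lemma comb (R : realType) (g k : nat) (theta : 'I_k -> 'I_k -> 'Z_g -> R) (i j : 'I_k) (u v : 'Z_g) :
  dotZ theta (Xf i j u v) - dotZ theta (Xf i j u 0) - dotZ theta (Xf i j 0 v)
  + dotZ theta (Xf i j 0 0) =
  \sum_(p : 'I_k) \sum_(q : 'I_k | (p < q)%N) \sum_(a : 'Z_g | a != 0)
     theta p q a * (Ind R (Xf i j u v) p q a - Ind R (Xf i j u 0) p q a
        - Ind R (Xf i j 0 v) p q a + Ind R (Xf i j 0 0) p q a).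
Proof.
rewrite /dotZ sum4; apply: eq_bigr => p _.
rewrite sum4; apply: eq_bigr => q _.
rewrite sum4; apply: eq_bigr => a _.
by rewrite /Zcoord /Ind alg4.
Qed.

Lemma sum_ind (R : realType) (g : nat) (f : 'Z_g -> R) (c : 'Z_g) :
  \sum_(a : 'Z_g | a != 0) f a * (if c == a then 1 else 0) = if c == 0 then 0 else f c.
Proof.
case: eqP => [->|/eqP hc].
  by apply: big1 => a ha; rewrite eq_sym (negbTE ha) mulr0.
rewrite (bigD1 c) //= eqxx mulr1 big1 ?addr0 // => a /andP [_ ha].
by rewrite eq_sym (negbTE ha) mulr0.
Qed.

Lemma Gzero (R : realType) (g k : nat) (theta : 'I_k -> 'I_k -> 'Z_g -> R) (i j : 'I_k) (u v : 'Z_g)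
  (p q : 'I_k) (a : 'Z_g) : (i < j)%N -> (p < q)%N -> ~~ ((p == i) && (q == j)) ->
  Ind R (Xf i j u v) p q a - Ind R (Xf i j u 0) p q a
        - Ind R (Xf i j 0 v) p q a + Ind R (Xf i j 0 0) p q a = 0.
Proof.
move=> hij hpq hn.
have nij : i != j by rewrite neq_ltn hij.
rewrite /Ind /Xf !ffunE.
have [pj|pj] := eqVneq p j.
  have qi : q != i by apply/eqP => qi; move: hpq; rewrite pj qi ltnNge ltnW.
  have pi : p != i by rewrite pj eq_sym.
  rewrite (negbTE qi) (negbTE pi); lra.
have [qj|qj] := eqVneq q j.
  have pi : p != i by move: hn; rewrite qj eqxx andbT.
  have qi : q != i by rewrite qj eq_sym.
  rewrite (negbTE qi) (negbTE pi); lra.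
lra.
Qed.

Lemma combG (R : realType) (g k : nat) (theta : 'I_k -> 'I_k -> 'Z_g -> R) (i j : 'I_k) (u v : 'Z_g) :
  (i < j)%N ->
  dotZ theta (Xf i j u v) - dotZ theta (Xf i j u 0) - dotZ theta (Xf i j 0 v)
  + dotZ theta (Xf i j 0 0) =
  (if u - v == 0 then 0 else theta i j (u - v)) - (if u == 0 then 0 else theta i j u)
  - (if - v == 0 then 0 else theta i j (- v)).
Proof.
move=> hij.
have nij : i != j by rewrite neq_ltn hij.
rewrite comb (bigD1 i) //= [X in _ + X]big1 ?addr0; last first.
  move=> p hp; apply: big1 => q hpq; apply: big1 => a _.
  by rewrite Gzero ?mulr0 // (negbTE hp).
rewrite (bigD1 j) //= [X in _ + X]big1 ?addr0; last first.
  move=> q /andP [hiq hq]; apply: big1 => a _.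
  by rewrite Gzero ?mulr0 // eqxx.
rewrite -!(sum_ind (theta i j)) -!sumrB; apply: eq_bigr => a ha.
have nji : j != i by rewrite eq_sym.
rewrite /Ind /Xf !ffunE !eqxx (negbTE nji) subr0 sub0r subrr (eq_sym 0 a) (negbTE ha) addr0 !mulrBr.
by [].
Qed.

Lemma alg3 (R : comRingType) (x1 x2 x3 x4 c m1 m2 m3 : R) :
  x1 - x4 = m1 * c -> x2 - x4 = m2 * c -> x3 - x4 = m3 * c ->
  x1 - x2 - x3 + x4 = (m1 - m2 - m3) * c.
Proof. by move=> h1 h2 h3; rewrite !mulrBl -h1 -h2 -h3; ring. Qed.

Lemma alg5 (R : comRingType) (x y p n c m m' : R) :
  x - y - p = m' * c -> y = n * p + m * c -> x = (n + 1) * p + (m * c + m' * c).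
Proof. by move/eqP; rewrite !subr_eq => /eqP -> ->; ring. Qed.

Lemma fin_eq (R : realType) (n : nat) (t c : R) (m : int) : (0 < n)%N ->
  0 = n%:R * t + m%:~R * c -> t = (- m)%:~R * (c / n%:R).
Proof.
move=> hn h.
have nz : (n%:R : R) != 0 by rewrite pnatr_eq0 -lt0n.
rewrite rmorphN /=.
have e : n%:R * t = - (m%:~R * c) by apply/eqP; rewrite -addr_eq0 -h.
rewrite -[t](mulKf nz) e mulNr mulrN; congr (- _); by rewrite mulrC -mulrA.
Qed.

Theorem corollary2p4 (R : realType) (g k : nat) (hg : (1 < g)%N) (hk : (1 < k)%N)
  (theta : 'I_k -> 'I_k -> 'Z_g -> R) :
  inLambda theta ->
  forall (i j : 'I_k) (a : 'Z_g), (i < j)%N -> a != 0 ->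
    (exists m : int, theta i j a = m%:~R * (2 * pi / (#[a]%g)%:R)) /\
    (exists m : int, theta i j a = m%:~R * (2 * pi / g%:R)).
Proof.
move=> hL i j a hij ha.
have hc : (g%:R ^- k : R) * #|{ffun 'I_k -> 'Z_g}|%:R = 1.
  rewrite card_ffun card_ord /= card_ord Zp_cast // natrX mulVf //.
  by rewrite expf_neq0 // pnatr_eq0 -lt0n ltnW.
have hcos := avg_eq1 hc hL.
have hdiff : forall x y, exists m : int, dotZ theta x - dotZ theta y = m%:~R * (2 * pi).
  by move=> x y; apply: cos_eq1; apply: hcos.
pose phi (c : 'Z_g) := if c == 0 then 0 else theta i j c.
have key : forall u v, exists m : int, phi (u - v) - phi u - phi (- v) = m%:~R * (2 * pi).
  move=> u v.
  have [m1 h1] := hdiff (Xf i j u v) (Xf i j 0 0).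
  have [m2 h2] := hdiff (Xf i j u 0) (Xf i j 0 0).
  have [m3 h3] := hdiff (Xf i j 0 v) (Xf i j 0 0).
  exists (m1 - m2 - m3); rewrite /phi -(combG theta u v hij) (alg3 h1 h2 h3).
  by rewrite !rmorphB.
have ind : forall n : nat, exists m : int, phi (a *+ n) = n%:R * phi a + m%:~R * (2 * pi).
  elim => [|n [m IH]].
    by exists 0; rewrite mulr0n /phi eqxx mul0r mul0r addr0.
  have [m' h'] := key (a *+ n) (- a).
  exists (m + m'); move: h'; rewrite opprK -mulrSr => h'.
  by rewrite rmorphD /= mulrDl -natr1 (alg5 h' IH).
have pa : phi a = theta i j a by rewrite /phi (negbTE ha).
split.
- have [m hm] := ind #[a]%g.
  have h0 : a *+ #[a]%g = 0 by rewrite Zp_mulrn -Zp_expg expg_order.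
  rewrite h0 /phi eqxx -/(phi a) pa in hm.
  by exists (- m); apply: fin_eq hm; apply: order_gt0.
- have [m hm] := ind g.
  have h0 : a *+ g = 0 by rewrite -mulr_natr pchar_Zp // mulr0.
  rewrite h0 /phi eqxx -/(phi a) pa in hm.
  by exists (- m); apply: fin_eq hm; apply: ltnW.
Qed.
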